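(* Let $f(x,y)=\mathbb{E}_{\xi\sim\mathcal{D}}[f(x,y;\xi)]$ on $\mathbb{R}^d\times\mathbb{R}^p$, $F(x)=\max_y f(x,y)$, and assume: (A1) there is $\mu>0$ such that for every $x$ the set $\arg\max_y f(x,y)$ is nonempty and $\|\nabla_y f(x,y)\|^2\ge2\mu\big(\max_{y'}f(x,y')-f(x,y)\big)$ for all $y$; (A2) for every $\xi$, $\nabla_x f(\cdot,\cdot;\xi)$ and $\nabla_y f(\cdot,\cdot;\xi)$ are $L_f$-Lipschitz in each of the arguments $x$ and $y$ separately. Let $\{x_t,y_t,\tilde x_t,\tilde y_t,v_t\}$ be generated by the MSGDA algorithm (see context). If $0<\gamma\le\frac{\lambda\mu}{16L}$ and $0<\lambda\le\frac{1}{2L_f\eta_t}$ for all $t\ge1$, then for all $t\ge1$, $$F(x_{t+1})-f(x_{t+1},y_{t+1})\le\Big(1-\frac{\eta_t\lambda\mu}{2}\Big)\big(F(x_t)-f(x_t,y_t)\big)+\frac{\eta_t}{8\gamma}\|\tilde x_{t+1}-x_t\|^2-\frac{\eta_t}{4\lambda}\|\tilde y_{t+1}-y_t\|^2+\eta_t\lambda\|\nabla_y f(x_t,y_t)-v_t\|^2,$$ where $F(x_t)=f(x_t,y^*(x_t))$ with $y^*(x_t)\in\arg\max_y f(x_t,y)$.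
   Context: $\kappa=L_f/\mu$, $L=L_f(1+\kappa/2)$. MSGDA algorithm: given constants $\gamma,\lambda>0$, sequences $\eta_t>0$ and $\alpha_t,\beta_t\in(0,1]$, initial points $x_1,y_1$, and samples $\xi_1,\xi_2,\dots$ drawn i.i.d. from $\mathcal{D}$: set $v_1=\nabla_y f(x_1,y_1;\xi_1)$, $w_1=\nabla_x f(x_1,y_1;\xi_1)$, and for $t\ge1$: $\tilde y_{t+1}=y_t+\lambda v_t$, $\tilde x_{t+1}=x_t-\gamma w_t$; $y_{t+1}=y_t+\eta_t(\tilde y_{t+1}-y_t)$, $x_{t+1}=x_t+\eta_t(\tilde x_{t+1}-x_t)$; $v_{t+1}=\nabla_y f(x_{t+1},y_{t+1};\xi_{t+1})+(1-\alpha_{t+1})[v_t-\nabla_y f(x_t,y_t;\xi_{t+1})]$; $w_{t+1}=\nabla_x f(x_{t+1},y_{t+1};\xi_{t+1})+(1-\beta_{t+1})[w_t-\nabla_x f(x_t,y_t;\xi_{t+1})]$. *)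

(* Defs.v *)
From HB Require Import structures.
From mathcomp Require Import all_boot all_order all_algebra.
From mathcomp Require Import all_classical all_reals all_analysis.
Set Implicit Arguments. Unset Strict Implicit. Unset Printing Implicit Defensive.
Import Order.TTheory GRing.Theory Num.Theory.
Import numFieldNormedType.Exports.
Local Open Scope classical_set_scope.
Local Open Scope ring_scope.

Definition dotv {R : realType} {n : nat} (u v : 'rV[R]_n) : R :=
  \sum_(i < n) u 0 i * v 0 i.
Definition sqnorm {R : realType} {n : nat} (u : 'rV[R]_n) : R := dotv u u.
Definition enorm {R : realType} {n : nat} (u : 'rV[R]_n) : R :=
  Num.sqrt (sqnorm u).

Definition is_gradient {R : realType} {n : nat}
  (h : 'rV[R]_n -> R) (g : 'rV[R]_n -> 'rV[R]_n) : Prop :=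
  forall x, differentiable h x /\ forall v, 'd h x v = dotv (g x) v.

Definition Fmax {R : realType} {d p : nat}
  (f : 'rV[R]_d -> 'rV[R]_p -> R) (x : 'rV[R]_d) : R :=
  sup (range (f x)).

(* Main.v *)
Require Import Defs.
From HB Require Import structures.
From mathcomp Require Import all_boot all_order all_algebra.
From mathcomp Require Import all_classical all_reals all_analysis.
From mathcomp Require Import ring lra.
Import Order.TTheory GRing.Theory Num.Theory.
Import numFieldNormedType.Exports.
Local Open Scope classical_set_scope.
Local Open Scope ring_scope.

Set Implicit Arguments. Unset Strict Implicit.
Section Vec.
Variables (R : realType) (n : nat).
Implicit Types u v w : 'rV[R]_n.

Lemma dotvC u v : dotv u v = dotv v u.
Proof. by apply: eq_bigr => i _; rewrite mulrC. Qed.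
Lemma dotvDl u v w : dotv (u + v) w = dotv u w + dotv v w.
Proof. by rewrite /dotv -big_split; apply: eq_bigr => i _; rewrite !mxE mulrDl. Qed.
Lemma dotvDr u v w : dotv w (u + v) = dotv w u + dotv w v.
Proof. by rewrite dotvC dotvDl !(dotvC w). Qed.
Lemma dotvZl a u v : dotv (a *: u) v = a * dotv u v.
Proof. by rewrite /dotv mulr_sumr; apply: eq_bigr => i _; rewrite !mxE mulrA. Qed.
Lemma dotvZr a u v : dotv u (a *: v) = a * dotv u v.
Proof. by rewrite dotvC dotvZl dotvC. Qed.
Lemma dotvNl u v : dotv (- u) v = - dotv u v.
Proof. by rewrite -scaleN1r dotvZl mulN1r. Qed.
Lemma dotvNr u v : dotv u (- v) = - dotv u v.
Proof. by rewrite dotvC dotvNl dotvC. Qed.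
Lemma dotvBl u v w : dotv (u - v) w = dotv u w - dotv v w.
Proof. by rewrite dotvDl dotvNl. Qed.
Lemma dotvBr u v w : dotv w (u - v) = dotv w u - dotv w v.
Proof. by rewrite dotvDr dotvNr. Qed.
Lemma sqnorm_ge0 u : 0 <= sqnorm u.
Proof. by apply: sumr_ge0 => i _; rewrite -expr2 sqr_ge0. Qed.
Lemma sqnorm_eq0 u : sqnorm u = 0 -> u = 0.
Proof.
move=> /eqP; rewrite /sqnorm /dotv psumr_eq0; last by move=> i _; rewrite -expr2 sqr_ge0.
move=> /allP H; apply/rowP => i; rewrite mxE.
have := H i (mem_index_enum _); rewrite /= -expr2 sqrf_eq0 => /eqP.
by [].
Qed.
Lemma enorm_ge0 u : 0 <= enorm u.
Proof. exact: sqrtr_ge0. Qed.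
Lemma enorm_sq u : enorm u ^+ 2 = sqnorm u.
Proof. by rewrite /enorm sqr_sqrtr // sqnorm_ge0. Qed.
Lemma sqnormD u v : sqnorm (u + v) = sqnorm u + 2 * dotv u v + sqnorm v.
Proof. rewrite /sqnorm !dotvDl !dotvDr (dotvC v u); ring. Qed.
Lemma sqnormB u v : sqnorm (u - v) = sqnorm u - 2 * dotv u v + sqnorm v.
Proof. rewrite /sqnorm !dotvBl !dotvBr (dotvC v u); ring. Qed.
Lemma sqnormZ a u : sqnorm (a *: u) = a ^+ 2 * sqnorm u.
Proof. by rewrite /sqnorm dotvZl dotvZr mulrA expr2. Qed.
Lemma sqnormN u : sqnorm (- u) = sqnorm u.
Proof. by rewrite /sqnorm dotvNl dotvNr opprK. Qed.

Lemma CS u v : dotv u v <= enorm u * enorm v.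
Proof.
have [a0|] := eqVneq (enorm v) 0.
  have : sqnorm v = 0 by rewrite -enorm_sq a0 expr2 mul0r.
  move/sqnorm_eq0 => ->; rewrite /dotv big1 ?mulr_ge0 ?enorm_ge0 // => i _; by rewrite mxE mulr0.
have [b0|] := eqVneq (enorm u) 0.
  have : sqnorm u = 0 by rewrite -enorm_sq b0 expr2 mul0r.
  move/sqnorm_eq0 => ->; rewrite /dotv big1 ?mulr_ge0 ?enorm_ge0 // => i _; by rewrite mxE mul0r.
move=> nb na.
have ha : 0 < enorm v by rewrite lt_neqAle eq_sym na enorm_ge0.
have hb : 0 < enorm u by rewrite lt_neqAle eq_sym nb enorm_ge0.
have := sqnorm_ge0 (enorm v *: u - enorm u *: v).
rewrite sqnormB !sqnormZ dotvZl dotvZr -!enorm_sq => H.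
have hab : 0 < enorm v * enorm u by rewrite mulr_gt0.
rewrite -subr_ge0.
have : 0 <= (enorm v * enorm u) * (enorm u * enorm v - dotv u v) by nra.
by rewrite pmulr_rge0.
Qed.

Lemma CSabs u v : `|dotv u v| <= enorm u * enorm v.
Proof.
rewrite ler_norml CS andbT lerNl -dotvNl.
apply: le_trans (CS _ _) _.
by rewrite /enorm sqnormN.
Qed.

Lemma enorm_triangle u v : enorm (u + v) <= enorm u + enorm v.
Proof.
rewrite -(ler_pXn2r (_ : 0 < 2)%N) ?nnegrE ?addr_ge0 ?enorm_ge0 //.
rewrite enorm_sq sqnormD -!enorm_sq.
have := CS u v; nra.
Qed.

Lemma enormN u : enorm (- u) = enorm u.
Proof. by rewrite /enorm sqnormN. Qed.

Lemma enormZ a u : enorm (a *: u) = `|a| * enorm u.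
Proof. by rewrite /enorm sqnormZ sqrtrM ?sqr_ge0 // sqrtr_sqr. Qed.

Lemma enorm_le_sq u c : 0 <= c -> sqnorm u <= c ^+ 2 -> enorm u <= c.
Proof.
move=> c0 h; rewrite -(ler_pXn2r (_ : 0 < 2)%N) ?nnegrE ?enorm_ge0 //.
by rewrite enorm_sq.
Qed.

End Vec.
Unset Implicit Arguments. Set Strict Implicit.

Section Calc.
Variable R : realType.

Lemma line_is_derive n (h : 'rV[R]_n -> R) g (b u : 'rV[R]_n) (t : R) :
  is_gradient h g -> is_derive t 1 (fun s => h (b + s *: u)) (dotv (g (b + t *: u)) u).
Proof.
move=> Hg; have [Hd Hv] := Hg (b + t *: u).
have Hder := @diff_derivable _ _ _ h _ u Hd.
have eqf : (fun s : R => s^-1 *: (((fun s => h (b + s *: u)) \o shift t) (s *: 1)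
                      - (fun s => h (b + s *: u)) t))
         = (fun s : R => s^-1 *: ((h \o shift (b + t *: u)) (s *: u) - h (b + t *: u))).
  apply: funext => s /=; congr (_ *: (h _ - _)).
  by rewrite -[s%:A]/(s * 1) mulr1 scalerDl addrCA.
split; first by rewrite /derivable eqf.
by rewrite /derive eqf -/(derive h _ u) deriveE // Hv.
Qed.

Lemma mvt_eq (phi dphi : R -> R) (a b : R) : a < b -> (forall t : R, is_derive t 1 phi (dphi t)) ->
  exists c, [/\ a < c, c < b & phi b - phi a = dphi c * (b - a)].
Proof.
move=> ab H.
have := @MVT R phi dphi a b ab (fun x _ => H x).
case.
  apply: derivable_within_continuous => x _.
  by have [] := H x.
by move=> c; rewrite in_itv /= => /andP[h1 h2] E; exists c.
Qed.

Lemma convex_line (phi dphi : R -> R) (t : R) : 0 < t < 1 ->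
  (forall s : R, is_derive s 1 phi (dphi s)) ->
  (forall s1 s2, 0 < s1 -> s1 <= s2 -> s2 < 1 -> dphi s1 <= dphi s2) ->
  phi t - phi 0 <= t * (phi 1 - phi 0).
Proof.
move=> /andP[t0 t1] H M.
have [c1 [h1 h2 E1]] := @mvt_eq phi dphi 0 t t0 H.
have [c2 [h3 h4 E2]] := @mvt_eq phi dphi t 1 t1 H.
have := M c1 c2 h1 (ltW (lt_trans h2 h3)) h4.
have -> : phi 1 - phi 0 = (phi 1 - phi t) + (phi t - phi 0) by ring.
rewrite E1 E2 subr0 => hc.
have : 0 <= t * (1 - t) * (dphi c2 - dphi c1).
  by rewrite !mulr_ge0 // ?subr_ge0 // ltW.
nra.
Qed.

Lemma deriv0_le (phi : R -> R) (D C : R) : is_derive (0:R) 1 phi D ->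
  (forall s, 0 < s < 1 -> phi s - phi 0 <= s * C) -> D <= C.
Proof.
move=> [Hd <-] H.
rewrite /derive cvg_at_rightE //.
apply: limr_le.
  by apply: cvgP; apply: cvg_dnbhs_at_right; exact: Hd.
near=> s.
have s0 : 0 < s by near: s; exact: nbhs_right_gt.
have s1 : s < 1 by near: s; exact: nbhs_right_lt.
rewrite /= /GRing.scale /= mulr1 addr0.
rewrite ler_pdivrMl //.
by apply: H; rewrite s0 s1.
Unshelve. all: by end_near.
Qed.

End Calc.

Section Integ.
Variables (R : realType) (dm : measure_display) (Xi : measurableType dm) (P : probability Xi R).

Let intZ c (g : Xi -> R) : P.-integrable setT (EFin \o g) ->
  P.-integrable setT (EFin \o (fun o => c * g o)).
Proof.
move=> H; have := integrableZl measurableT c H.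
by have -> : (fun x => c%:E * (EFin \o g) x)%E = EFin \o (fun o => c * g o)
  by apply: funext => o; rewrite /= EFinM.
Qed.

Let intD (g h : Xi -> R) : P.-integrable setT (EFin \o g) -> P.-integrable setT (EFin \o h) ->
  P.-integrable setT (EFin \o (fun o => g o + h o)).
Proof.
move=> H1 H2; have := integrableD measurableT H1 H2.
by have -> : ((EFin \o g) \+ (EFin \o h))%E = EFin \o (fun o => g o + h o)
  by apply: funext => o; rewrite /= EFinD.
Qed.

Lemma integ_le (c1 c2 c3 c4 C : R) (g1 g2 g3 g4 : Xi -> R) :
  P.-integrable setT (EFin \o g1) -> P.-integrable setT (EFin \o g2) ->
  P.-integrable setT (EFin \o g3) -> P.-integrable setT (EFin \o g4) ->
  (forall o, c1 * g1 o + c2 * g2 o + c3 * g3 o + c4 * g4 o <= C) ->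
  c1 * Rintegral P setT g1 + c2 * Rintegral P setT g2 + c3 * Rintegral P setT g3
  + c4 * Rintegral P setT g4 <= C.
Proof.
move=> I1 I2 I3 I4 H.
have J1 := intZ c1 g1 I1; have J2 := intZ c2 g2 I2; have J3 := intZ c3 g3 I3; have J4 := intZ c4 g4 I4.
have K12 := intD _ _ J1 J2; have K123 := intD _ _ K12 J3.
rewrite -(RintegralZl _ measurableT I1) -(RintegralZl _ measurableT I2).
rewrite -(RintegralZl _ measurableT I3) -(RintegralZl _ measurableT I4).
rewrite -(RintegralD measurableT J1 J2) -(RintegralD measurableT K12 J3).
rewrite -(RintegralD measurableT K123 J4).
apply: le_trans.
  apply: (@le_Rintegral _ _ _ _ _ _ (fun _ => C) measurableT).
  - exact: intD _ _ K123 J4.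
  - by apply: (integrableS measurableT) => //; exact: finite_measure_integrable_cst.
  - by move=> o _; exact: H.
rewrite Rintegral_cst //.
have hP : fine (P [set: Xi]) = 1.
  by have := probability_setT P => /= ->.
by rewrite hP mulr1.
Qed.

End Integ.


Lemma is_derive_ext (R : realType) (phi1 phi2 : R -> R) (t df1 df2 : R) :
  (forall s, phi1 s = phi2 s) -> df1 = df2 -> is_derive t 1 phi1 df1 -> is_derive t 1 phi2 df2.
Proof.
by move=> E <-; have -> : phi1 = phi2 by apply: funext.
Qed.

Lemma is_derive_sq (R : realType) (c t : R) :
  is_derive t 1 (fun s : R => c * (s * s)) (c * (2 * t)).
Proof.
have H1 := @is_deriveM R R^o id id t 1 1 1 (is_derive_id _ _) (is_derive_id _ _).
have H2 := @is_deriveZ R R^o R^o _ c t 1 _ H1.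
apply: is_derive_ext H2 => [s|] /=.
  by [].
rewrite /GRing.scale /=; ring.
Qed.

Section FProps.
Variables (R : realType) (d p : nat) (dm : measure_display) (Xi : measurableType dm)
  (P : probability Xi R)
  (fs : Xi -> 'rV[R]_d -> 'rV[R]_p -> R)
  (gsy : Xi -> 'rV[R]_d -> 'rV[R]_p -> 'rV[R]_p)
  (f : 'rV[R]_d -> 'rV[R]_p -> R)
  (gy : 'rV[R]_d -> 'rV[R]_p -> 'rV[R]_p) (Lf : R).
Hypothesis Hint : forall a b, P.-integrable setT (fun o => (fs o a b)%:E).
Hypothesis Hf : forall a b, f a b = Rintegral P setT (fun o => fs o a b).
Hypothesis Hgsy : forall o a, is_gradient (fun b => fs o a b) (fun b => gsy o a b).
Hypothesis Hgy : forall a, is_gradient (fun b => f a b) (fun b => gy a b).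
Hypothesis Lf0 : 0 < Lf.
Hypothesis Lx : forall o a a' b, enorm (gsy o a b - gsy o a' b) <= Lf * enorm (a - a').
Hypothesis Ly : forall o a b b', enorm (gsy o a b - gsy o a b') <= Lf * enorm (b - b').

Lemma pt0 (b w : 'rV[R]_p) : b + (0:R) *: w = b.
Proof. by rewrite scale0r addr0. Qed.
Lemma pt1 (b w : 'rV[R]_p) : b + (1:R) *: w = b + w.
Proof. by rewrite scale1r. Qed.

Lemma fs_mixed o x x' (b w : 'rV[R]_p) :
  fs o x' (b + w) - fs o x (b + w) - fs o x' b + fs o x b <= Lf * enorm (x' - x) * enorm w.
Proof.
have H : forall t : R, is_derive t 1 (fun s => fs o x' (b + s *: w) - fs o x (b + s *: w))
    (dotv (gsy o x' (b + t *: w)) w - dotv (gsy o x (b + t *: w)) w).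
  move=> t; have HB := is_deriveB (@line_is_derive R p _ _ b w t (Hgsy o x'))
                                            (@line_is_derive R p _ _ b w t (Hgsy o x)).
  move: HB; apply: is_derive_ext => //.
have [c [_ _ E]] := @mvt_eq R _ _ 0 1 ltr01 H.
move: E; rewrite !pt0 !pt1 subr0 mulr1 => E.
have -> : fs o x' (b + w) - fs o x (b + w) - fs o x' b + fs o x b
   = fs o x' (b + w) - fs o x (b + w) - (fs o x' b - fs o x b) by ring.
rewrite E -dotvBl.
apply: le_trans (CS _ _) _.
by rewrite ler_wpM2r ?enorm_ge0 // Lx.
Qed.

Lemma f_mixed x x' (b w : 'rV[R]_p) :
  f x' (b + w) - f x (b + w) - f x' b + f x b <= Lf * enorm (x' - x) * enorm w.
Proof.
rewrite !Hf.
have := @integ_le R dm Xi P 1 (-1) (-1) 1 (Lf * enorm (x' - x) * enorm w)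
   (fun o => fs o x' (b + w)) (fun o => fs o x (b + w)) (fun o => fs o x' b) (fun o => fs o x b)
   (Hint _ _) (Hint _ _) (Hint _ _) (Hint _ _).
rewrite !mul1r !mulN1r; apply => o.
by have := fs_mixed o x x' b w; rewrite !mul1r !mulN1r.
Qed.


Lemma fs_convex o a (b w : 'rV[R]_p) (t : R) : 0 < t < 1 ->
  fs o a (b + t *: w) - fs o a b + Lf / 2 * (t * t) * sqnorm w
  <= t * (fs o a (b + w) - fs o a b + Lf / 2 * sqnorm w).
Proof.
move=> ht.
pose c := Lf / 2 * sqnorm w.
have H : forall s : R, is_derive s 1 (fun s => fs o a (b + s *: w) + c * (s * s))
    (dotv (gsy o a (b + s *: w)) w + c * (2 * s)).
  move=> s; have HB := is_deriveD (@line_is_derive R p _ _ b w s (Hgsy o a)) (@is_derive_sq R c s).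
  by move: HB; apply: is_derive_ext.
have := @convex_line R _ _ t ht H.
rewrite !pt0 !pt1 !mulr0 !mul1r !addr0 mulr1.
have -> : fs o a (b + t *: w) + c * (t * t) - fs o a b = 
   fs o a (b + t *: w) - fs o a b + Lf / 2 * (t * t) * sqnorm w by rewrite /c; ring.
have -> : fs o a (b + w) + c - fs o a b = fs o a (b + w) - fs o a b + Lf / 2 * sqnorm w by rewrite /c; ring.
apply.
move=> s1 s2 s10 s12 s21.
have E : (b + s2 *: w) - (b + s1 *: w) = (s2 - s1) *: w.
  by rewrite scalerBl opprD addrACA subrr add0r.
have := CS (gsy o a (b + s2 *: w) - gsy o a (b + s1 *: w)) w.
have := Ly o a (b + s2 *: w) (b + s1 *: w).
rewrite E enormZ ger0_norm ?subr_ge0 // dotvBl => h1 h2.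
have hw := enorm_ge0 w.
have h3 : dotv (gsy o a (b + s1 *: w)) w - dotv (gsy o a (b + s2 *: w)) w <= Lf * (s2 - s1) * enorm w ^+ 2.
  have := CS (gsy o a (b + s1 *: w) - gsy o a (b + s2 *: w)) w.
  have := Ly o a (b + s1 *: w) (b + s2 *: w).
  have E2 : (b + s1 *: w) - (b + s2 *: w) = - ((s2 - s1) *: w) by rewrite -E opprB.
  rewrite E2 enormN enormZ ger0_norm ?subr_ge0 // dotvBl => k1 k2.
  apply: le_trans k2 _; rewrite expr2 mulrA ler_wpM2r // -mulrA; exact: k1.
have hsq : sqnorm w = enorm w ^+ 2 by rewrite enorm_sq.
have hc : c = Lf / 2 * enorm w ^+ 2 by rewrite -hsq.
rewrite hc; nra.
Qed.

Lemma f_convex a (b w : 'rV[R]_p) (t : R) : 0 < t < 1 ->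
  f a (b + t *: w) - f a b + Lf / 2 * (t * t) * sqnorm w
  <= t * (f a (b + w) - f a b + Lf / 2 * sqnorm w).
Proof.
move=> ht.
have := @integ_le R dm Xi P 1 (t - 1) (-t) 0 (t * (Lf / 2 * sqnorm w) - Lf / 2 * (t * t) * sqnorm w)
   (fun o => fs o a (b + t *: w)) (fun o => fs o a b) (fun o => fs o a (b + w)) (fun o => fs o a b)
   (Hint _ _) (Hint _ _) (Hint _ _) (Hint _ _).
rewrite -!Hf => H.
have : 1 * f a (b + t *: w) + (t - 1) * f a b + - t * f a (b + w) + 0 * f a b <=
   t * (Lf / 2 * sqnorm w) - Lf / 2 * (t * t) * sqnorm w.
  apply: H => o; have := fs_convex o a b w t ht; lra.
lra.
Qed.

Lemma f_descent a (b w : 'rV[R]_p) :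
  f a b + dotv (gy a b) w - Lf / 2 * sqnorm w <= f a (b + w).
Proof.
have H := @line_is_derive R p _ _ b w 0 (Hgy a).
rewrite pt0 in H.
have := @deriv0_le R _ _ (f a (b + w) - f a b + Lf / 2 * sqnorm w) H.
rewrite pt0.
have hw := sqnorm_ge0 w.
have Hl : 0 <= Lf / 2 by rewrite divr_ge0 // ltW.
suff : forall s : R, 0 < s < 1 -> f a (b + s *: w) - f a b <= s * (f a (b + w) - f a b + Lf / 2 * sqnorm w).
  move=> K /(_ K); lra.
move=> s hs; have := f_convex a b w s hs.
have : 0 <= Lf / 2 * (s * s) * sqnorm w by rewrite !mulr_ge0 // ?mulr_ge0 // ltW //; case/andP: hs.
lra.
Qed.

Lemma gy_lip x x' (b : 'rV[R]_p) : enorm (gy x' b - gy x b) <= Lf * enorm (x' - x).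
Proof.
set dl := gy x' b - gy x b.
set M := Lf * enorm (x' - x).
have HB := is_deriveB (@line_is_derive R p _ _ b dl 0 (Hgy x')) (@line_is_derive R p _ _ b dl 0 (Hgy x)).
have := @deriv0_le R (fun s => f x' (b + s *: dl) - f x (b + s *: dl)) _ (M * enorm dl) HB.
rewrite !pt0 -dotvBl -/dl.
have hM : 0 <= M by rewrite mulr_ge0 ?enorm_ge0 // ltW.
have hd := enorm_ge0 dl.
have sq : dotv dl dl = enorm dl ^+ 2 by rewrite enorm_sq.
rewrite sq.
suff : forall s : R, 0 < s < 1 -> f x' (b + s *: dl) - f x (b + s *: dl) - (f x' b - f x b) <= s * (M * enorm dl).
  move=> K /(_ K) h; nra.
move=> s /andP[s0 s1].
have := f_mixed x x' b (s *: dl); rewrite enormZ (ger0_norm (ltW s0)) => h.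
rewrite /M; lra.
Qed.

End FProps.

Lemma step_len (R : realType) (r r' g s c : R) : 0 <= r -> 0 <= r' -> 0 <= g -> 0 < s -> 0 <= c ->
  r' ^+ 2 <= r ^+ 2 - c * g ^+ 2 -> 4 * s ^+ 2 * r ^+ 2 <= g ^+ 2 -> c * s * g <= r - r'.
Proof.
move=> r0 r'0 g0 s0 c0 h1 h2.
have cg : 0 <= c * g ^+ 2 by rewrite mulr_ge0 // sqr_ge0.
have rr : r' <= r.
  rewrite -(ler_pXn2r (_ : 0 < 2)%N) ?nnegrE //; lra.
have sr : 2 * s * r <= g.
  rewrite -(ler_pXn2r (_ : 0 < 2)%N) ?nnegrE ?mulr_ge0 //; last by rewrite ltW.
  by rewrite !exprMn -natrX; lra.
have [->|gp] := eqVneq g 0; first by rewrite mulr0 subr_ge0.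
have gp' : 0 < g by rewrite lt_neqAle eq_sym gp g0.
have k1 : s * (c * g ^+ 2) <= s * ((r - r') * (r + r')).
  by rewrite ler_pM2l //; nra.
have k2 : s * ((r - r') * (r + r')) <= (r - r') * g.
  have : s * (r + r') <= g by nra.
  have : 0 <= r - r' by lra.
  nra.
have : g * (c * s * g) <= g * (r - r').
  have -> : g * (c * s * g) = s * (c * g ^+ 2) by ring.
  rewrite [X in _ <= X]mulrC; exact: le_trans k1 k2.
by rewrite ler_pM2l.
Qed.

Section QGsec.
Variables (R : realType) (d p : nat)
  (f : 'rV[R]_d -> 'rV[R]_p -> R)
  (gy : 'rV[R]_d -> 'rV[R]_p -> 'rV[R]_p) (Lf mu : R).
Hypothesis Lf0 : 0 < Lf.
Hypothesis mu0 : 0 < mu.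
Hypothesis Hdesc : forall a b w, f a b + dotv (gy a b) w - Lf / 2 * sqnorm w <= f a (b + w).
Hypothesis Hmax : forall a, exists b0, forall b, f a b <= f a b0.
Hypothesis HPL : forall a b, sqnorm (gy a b) >= 2 * mu * (Fmax f a - f a b).

Lemma Fmax_ub a b : f a b <= Fmax f a.
Proof.
have [b0 Hb0] := Hmax a.
apply: ub_le_sup; last by exists b.
by exists (f a b0) => _ [c _ <-].
Qed.

Lemma grad_bound a b : sqnorm (gy a b) <= 2 * Lf * (Fmax f a - f a b).
Proof.
have := Hdesc a b (Lf^-1 *: gy a b).
rewrite dotvZr sqnormZ -/(sqnorm (gy a b)).
set q := sqnorm (gy a b).
have hu := Fmax_ub a (b + Lf^-1 *: gy a b).
have e : Lf / 2 * (Lf^-1 ^+ 2 * q) = Lf^-1 * q / 2 by field; rewrite gt_eqF.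
rewrite e => h.
have k : Lf^-1 * q <= 2 * (Fmax f a - f a b) by lra.
have E : q = Lf * (Lf^-1 * q) by field; rewrite gt_eqF.
by rewrite [X in X <= _]E (mulrC 2) -mulrA ler_pM2l.
Qed.


Lemma QG a b0 eps : 0 < eps -> exists b, Fmax f a - f a b <= eps /\
   enorm (b - b0) <= Num.sqrt (2 * (Fmax f a - f a b0) / mu) + eps.
Proof.
move=> eps0.
set Fm := Fmax f a.
set rho := Num.sqrt (2 * (Fm - f a b0) / mu).
have rho0 : 0 <= rho := sqrtr_ge0 _.
have re : 0 < rho + eps by lra.
set u := eps / (rho + eps).
have u0 : 0 < u by rewrite divr_gt0.
have ue : u * (rho + eps) = eps by rewrite /u; field; rewrite gt_eqF.
have u1 : u <= 1 by nra.
set h := u / Lf.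
have h0 : 0 < h by rewrite divr_gt0.
have hL : Lf * h = u by rewrite /h; field; rewrite gt_eqF.
set th := 1 - u / 2.
have th0 : 1 / 2 <= th by rewrite /th; lra.
pose bs := fix bs k := if k is k'.+1 then bs k' + h *: gy a (bs k') else b0.
pose e := fun k => Fm - f a (bs k).
have e0 : forall k, 0 <= e k by move=> k; rewrite subr_ge0 Fmax_ub.
have step : forall k, e k.+1 <= e k - h * th * sqnorm (gy a (bs k)).
  move=> k; have := Hdesc a (bs k) (h *: gy a (bs k)).
  rewrite dotvZr sqnormZ -/(sqnorm (gy a (bs k))).
  have hq := sqnorm_ge0 (gy a (bs k)).
  have E : Lf / 2 * (h ^+ 2 * sqnorm (gy a (bs k))) = u / 2 * h * sqnorm (gy a (bs k)).
    by rewrite -hL; ring.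
  rewrite E /e /= /th; lra.
have PL : forall k, 2 * mu * e k <= sqnorm (gy a (bs k)) by move=> k; exact: HPL.
set c := 2 * mu * h * th.
have thp : 0 < th by lra.
have c0 : 0 < c by apply: mulr_gt0 => //; apply: mulr_gt0 => //; apply: mulr_gt0.
have I1 : forall K : nat, e K * (1 + c * K%:R) <= e 0%N.
  elim=> [|K IH]; first by rewrite mulr0 addr0 mulr1.
  have s1 := step K; have s2 := PL K; have s3 := e0 K; have s4 := e0 K.+1.
  have hq := sqnorm_ge0 (gy a (bs K)).
  have A1 : e K.+1 <= e K * (1 - c).
    have : h * th * (2 * mu * e K) <= h * th * sqnorm (gy a (bs K)).
      by rewrite ler_pM2l // mulr_gt0.
    rewrite /c; lra.
  have A0 : 0 <= c * K%:R by rewrite mulr_ge0 // ltW.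
  have B1 : e K.+1 * (1 + c * K%:R) <= e K * (1 - c) * (1 + c * K%:R) by rewrite ler_wpM2r //; lra.
  have B2 : e K.+1 <= e K.
    have : 0 <= h * th * sqnorm (gy a (bs K)) by apply: mulr_ge0 => //; apply: mulr_ge0; apply: ltW.
    lra.
  have B3 : 0 <= c * e K * (c * K%:R) by apply: mulr_ge0 => //; apply: mulr_ge0 => //; apply: ltW.
  rewrite -natr1 mulrDr mulr1.
  nra.
have I2 : forall K : nat, th * Num.sqrt (mu / 2) * enorm (bs K - b0) <= Num.sqrt (e 0%N) - Num.sqrt (e K).
  elim=> [|K IH].
    rewrite subrr /= subrr /enorm /sqnorm /dotv big1 ?sqrtr0 ?mulr0 //.
    by move=> i _; rewrite mxE mul0r.
  have T : enorm (bs K.+1 - b0) <= enorm (bs K - b0) + h * enorm (gy a (bs K)).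
    have -> : bs K.+1 - b0 = (bs K - b0) + h *: gy a (bs K) by rewrite /= addrAC.
    by apply: le_trans (enorm_triangle _ _) _; rewrite enormZ ger0_norm // ltW.
  have sm0 : 0 < Num.sqrt (mu / 2) by rewrite sqrtr_gt0 divr_gt0.
  have SL := @step_len R (Num.sqrt (e K)) (Num.sqrt (e K.+1)) (enorm (gy a (bs K)))
     (Num.sqrt (mu / 2)) (h * th) (sqrtr_ge0 _) (sqrtr_ge0 _) (enorm_ge0 _) sm0.
  have SL' : h * th * Num.sqrt (mu / 2) * enorm (gy a (bs K)) <= Num.sqrt (e K) - Num.sqrt (e K.+1).
    apply: SL.
    - by apply: mulr_ge0; apply: ltW.
    - rewrite enorm_sq !sqr_sqrtr ?e0 //; exact: step.
    - rewrite enorm_sq !sqr_sqrtr ?e0 //; last by apply: divr_ge0 => //; apply: ltW.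
      have := PL K; lra.
  have k0 : 0 <= th * Num.sqrt (mu / 2) by apply: mulr_ge0; [apply: ltW | apply: sqrtr_ge0].
  have := ler_wpM2l k0 T.
  nra.
have [N HN] : exists N : nat, e 0%N < c * eps * N%:R /\ (0 < N)%N.
  exists (Num.Def.trunc (e 0%N / (c * eps))).+1; split => //.
  have := truncnS_gt (e 0%N / (c * eps)).
  have ce : 0 < c * eps by rewrite mulr_gt0.
  rewrite ltr_pdivrMr // => k; lra.
case: HN => HN N0.
exists (bs N); split.
  have := I1 N; have := e0 N.
  have cN : 0 < c * N%:R by rewrite mulr_gt0 // ltr0n.
  move=> h1 h2.
  have : e N * (c * N%:R) <= eps * (c * N%:R) by nra.
  by rewrite ler_pM2r.
have sm0 : 0 < Num.sqrt (mu / 2) by rewrite sqrtr_gt0 divr_gt0.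
have sr : Num.sqrt (mu / 2) * rho = Num.sqrt (e 0%N).
  rewrite /rho -sqrtrM ?divr_ge0 ?ltW //; congr Num.sqrt.
  by rewrite /e /=; field; rewrite gt_eqF.
have := I2 N; rewrite -sr => k.
have k2 : th * enorm (bs N - b0) <= th * (rho + eps).
  have : Num.sqrt (mu / 2) * (th * enorm (bs N - b0)) <= Num.sqrt (mu / 2) * rho.
    have := sqrtr_ge0 (e N). lra.
  rewrite ler_pM2l // => k3.
  apply: le_trans k3 _.
  rewrite /th; nra.
by rewrite ler_pM2l in k2; lra.
Qed.

End QGsec.

Lemma key_const (R : realType) (et lam mu Lf gam : R) :
  0 < et -> 0 < lam -> 0 < mu -> 0 < Lf -> 0 < gam -> mu <= Lf ->
  gam <= lam * mu / (16 * (Lf * (1 + Lf / mu / 2))) -> lam <= 1 / (2 * Lf * et) ->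
  Lf ^+ 2 / (lam * mu ^+ 2) + lam * Lf ^+ 2 * et ^+ 2 <= 1 / (8 * gam).
Proof.
move=> et0 l0 m0 L0 g0 mL hg hl.
have hl' : lam * et * (2 * Lf) <= 1.
  by move: hl; rewrite ler_pdivlMr ?mulr_gt0 // => h; nra.
have LL : 0 < 16 * (Lf * (1 + Lf / mu / 2)) by rewrite mulr_gt0 // mulr_gt0 // addr_gt0 // divr_gt0 // divr_gt0.
have hg' : gam * (16 * (Lf * (1 + Lf / mu / 2))) <= lam * mu.
  by move: hg; rewrite ler_pdivlMr.
have hg2 : gam * (16 * Lf * mu + 8 * Lf ^+ 2) <= lam * mu ^+ 2.
  have -> : 16 * Lf * mu + 8 * Lf ^+ 2 = 16 * (Lf * (1 + Lf / mu / 2)) * mu by field; rewrite gt_eqF.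
  have := ler_wpM2r (ltW m0) hg'; rewrite expr2; lra.
have A2 : (lam * et) ^+ 2 * (Lf * mu) <= 1 / 4.
  have : (lam * et * (2 * Lf)) ^+ 2 <= 1 by rewrite expr_le1 // mulr_ge0 // mulr_ge0 // ltW // mulr_gt0.
  nra.
rewrite ler_pdivlMr ?mulr_gt0 //.
have -> : (Lf ^+ 2 / (lam * mu ^+ 2) + lam * Lf ^+ 2 * et ^+ 2) * (8 * gam)
   = (8 * gam * Lf ^+ 2 + 8 * gam * (lam * et) ^+ 2 * Lf ^+ 2 * mu ^+ 2) / (lam * mu ^+ 2).
  by field; rewrite !gt_eqF.
rewrite ler_pdivrMr ?mulr_gt0 ?exprn_gt0 // mul1r.
have : 8 * gam * (lam * et) ^+ 2 * Lf ^+ 2 * mu ^+ 2 <= 8 * gam * Lf * mu / 4.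
  have -> : 8 * gam * (lam * et) ^+ 2 * Lf ^+ 2 * mu ^+ 2 = (8 * gam * Lf * mu) * ((lam * et) ^+ 2 * (Lf * mu)) by ring.
  rewrite [X in _ <= X](_ : 8 * gam * Lf * mu / 4 = (8 * gam * Lf * mu) * (1/4)); last by field.
  by rewrite ler_pM2l ?mulr_gt0.
have : 0 <= gam * Lf * mu by rewrite !mulr_ge0 // ltW.
move=> *; lra.
Qed.

Lemma final_alg (R : realType) (et lam mu Lf gam G G' rho nd V2 gv2 gg2 gp2 dv gvp2 Fterm : R) :
 0 < et -> 0 < lam -> 0 < mu -> 0 < Lf -> 0 < gam -> mu <= Lf ->
 gam <= lam * mu / (16 * (Lf * (1 + Lf / mu / 2))) -> lam <= 1 / (2 * Lf * et) ->
 0 <= nd -> 0 <= V2 -> 0 <= G' -> 0 <= rho -> rho ^+ 2 * mu = 2 * G' ->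
 G' <= G + Lf * et * nd * rho ->
 2 * dv = gp2 + V2 - gvp2 -> gvp2 <= 2 * gv2 + 2 * gg2 -> gg2 <= (Lf * et * nd) ^+ 2 ->
 2 * mu * G' <= gp2 ->
 Fterm <= G' - et * (lam * dv) + Lf / 2 * (et ^+ 2 * (lam ^+ 2 * V2)) ->
 Fterm <= (1 - et * lam * mu / 2) * G + et / (8 * gam) * nd ^+ 2
          - et / (4 * lam) * (lam ^+ 2 * V2) + et * lam * gv2.
Proof.
move=> et0 l0 m0 L0 g0 mL hg hl nd0 V0 G'0 r0 hr hG hdv hgvp hgg hgp hF.
have KC := @key_const _ _ _ _ _ _ et0 l0 m0 L0 g0 mL hg hl.
set A := et * lam.
have A0 : 0 < A by rewrite mulr_gt0.
have hl' : A * (2 * Lf) <= 1.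
  by move: hl; rewrite ler_pdivlMr ?mulr_gt0 // => h; rewrite /A; nra.
set M := Lf * et * nd.
have M0 : 0 <= M by rewrite !mulr_ge0 // ltW.
have P1 : A * (2 * mu * G') <= A * gp2 by rewrite ler_pM2l.
have P2 : A * gvp2 <= A * (2 * gv2 + 2 * gg2) by rewrite ler_pM2l.
have S1 : Fterm <= (1 - A * mu) * G' - A / 2 * V2 + A * gv2 + A * gg2 + Lf / 2 * (A ^+ 2 * V2).
  have E1 : et * (lam * dv) = A / 2 * (2 * dv) by rewrite /A; field.
  have E2 : et ^+ 2 * (lam ^+ 2 * V2) = A ^+ 2 * V2 by rewrite /A; ring.
  rewrite E1 E2 hdv in hF; lra.
have S2 : Lf / 2 * (A ^+ 2 * V2) <= A / 4 * V2.
  have : 0 <= A * V2 / 4 by apply: divr_ge0 => //; apply: mulr_ge0 => //; apply: ltW.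
  move=> h; have := ler_wpM2r h hl'.
  have -> : Lf / 2 * (A ^+ 2 * V2) = A * (2 * Lf) * (A * V2 / 4) by field.
  by rewrite mul1r; have -> : A / 4 * V2 = A * V2 / 4 by field.
have E3 : et / (4 * lam) * (lam ^+ 2 * V2) = A / 4 * V2 by rewrite /A; field; rewrite gt_eqF.
set s := A * mu.
have s0 : 0 < s by rewrite mulr_gt0.
have s1 : s <= 1 / 2.
  have : A * mu * 2 <= A * (2 * Lf) by rewrite (mulrC 2) -mulrA ler_pM2l // ler_pM2r.
  rewrite /s; lra.
have sm0 : 0 < s * mu by rewrite mulr_gt0.
set Q := M ^+ 2 / (s * mu).
have hQ : Q * (s * mu) = M ^+ 2 by rewrite /Q mulfVK // gt_eqF.
have S3 : (1 - s) * G' - (1 - s / 2) * G <= Q.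
  have T1 : (1 - s / 2) * (G' - M * rho) <= (1 - s / 2) * G.
    have hG2 : G' <= G + M * rho by rewrite /M.
    by apply: ler_wpM2l; lra.
  have T2 : s * mu * ((1 - s) * G' - (1 - s / 2) * G) <= M ^+ 2.
    set z := s * mu * rho.
    have z0 : 0 <= z by rewrite mulr_ge0 // ltW.
    have T3 : s * mu * ((1 - s) * G' - (1 - s / 2) * G)
           <= s * mu * ((1 - s) * G' - (1 - s / 2) * (G' - M * rho)).
      by rewrite ler_pM2l //; lra.
    apply: le_trans T3 _.
    have -> : s * mu * ((1 - s) * G' - (1 - s / 2) * (G' - M * rho))
            = - (s / 2) * (s * mu * G') + (1 - s / 2) * z * M by rewrite /z; field.
    have hG' : G' = rho ^+ 2 * mu / 2 by rewrite hr; field.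
    have -> : - (s / 2) * (s * mu * G') = - (z ^+ 2 / 4) by rewrite /z hG'; field.
    have zM : 0 <= z * M by rewrite mulr_ge0.
    have k1 : (1 - s / 2) * z * M <= z * M.
      have : 0 <= s / 2 * (z * M) by rewrite mulr_ge0 // divr_ge0 // ltW.
      lra.
    have k2 : 0 <= (z / 2 - M) ^+ 2 by rewrite sqr_ge0.
    have e2 : (z / 2 - M) ^+ 2 = z ^+ 2 / 4 - z * M + M ^+ 2 by field.
    lra.
  have : s * mu * ((1 - s) * G' - (1 - s / 2) * G) <= s * mu * Q by rewrite [X in _ <= X]mulrC hQ.
  by rewrite ler_pM2l.
have S4 : A * gg2 <= A * M ^+ 2 by rewrite ler_pM2l.
have S5 : Q + A * M ^+ 2 <= et / (8 * gam) * nd ^+ 2.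
  have -> : Q + A * M ^+ 2 = et * nd ^+ 2 * (Lf ^+ 2 / (lam * mu ^+ 2) + lam * Lf ^+ 2 * et ^+ 2).
    rewrite /Q /M /s /A; field; rewrite !gt_eqF //.
  have -> : et / (8 * gam) * nd ^+ 2 = et * nd ^+ 2 * (1 / (8 * gam)) by field; rewrite gt_eqF.
  by apply: ler_wpM2l => //; rewrite mulr_ge0 // ?sqr_ge0 // ltW.
rewrite E3.
move: S1 S2 S3 S4 S5; rewrite /Q /s /M /A => S1 S2 S3 S4 S5.
lra.
Qed.

Theorem lemma1 (R : realType) (d p : nat)
  (dm : measure_display) (Xi : measurableType dm) (P : probability Xi R)
  (* stochastic components f(x,y;xi) and their partial gradients *)
  (fs : Xi -> 'rV[R]_d -> 'rV[R]_p -> R)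
  (gsx : Xi -> 'rV[R]_d -> 'rV[R]_p -> 'rV[R]_d)
  (gsy : Xi -> 'rV[R]_d -> 'rV[R]_p -> 'rV[R]_p)
  (* the expected function f and its partial gradients *)
  (f : 'rV[R]_d -> 'rV[R]_p -> R)
  (gx : 'rV[R]_d -> 'rV[R]_p -> 'rV[R]_d)
  (gy : 'rV[R]_d -> 'rV[R]_p -> 'rV[R]_p)
  (mu Lf gamma lambda : R)
  (eta alpha beta : nat -> R)
  (xi : nat -> Xi)
  (x xt w : nat -> 'rV[R]_d) (y yt v : nat -> 'rV[R]_p) :
  (* f(x,y) = E_{xi ~ D}[f(x,y;xi)] *)
  (forall a b, P.-integrable setT (fun o => (fs o a b)%:E)) ->
  (forall a b, f a b = Rintegral P setT (fun o => fs o a b)) ->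
  (* gradients *)
  (forall o b, is_gradient (fun a => fs o a b) (fun a => gsx o a b)) ->
  (forall o a, is_gradient (fun b => fs o a b) (fun b => gsy o a b)) ->
  (forall b, is_gradient (fun a => f a b) (fun a => gx a b)) ->
  (forall a, is_gradient (fun b => f a b) (fun b => gy a b)) ->
  (* (A1) *)
  0 < mu ->
  (forall a, exists b0, forall b, f a b <= f a b0) ->
  (forall a b, sqnorm (gy a b) >= 2 * mu * (Fmax f a - f a b)) ->
  (* (A2) *)
  0 < Lf ->
  (forall o a a' b, enorm (gsx o a b - gsx o a' b) <= Lf * enorm (a - a')) ->
  (forall o a b b', enorm (gsx o a b - gsx o a b') <= Lf * enorm (b - b')) ->
  (forall o a a' b, enorm (gsy o a b - gsy o a' b) <= Lf * enorm (a - a')) ->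
  (forall o a b b', enorm (gsy o a b - gsy o a b') <= Lf * enorm (b - b')) ->
  (* MSGDA parameters *)
  (forall t, (1 <= t)%N -> 0 < eta t) ->
  (forall t, (1 <= t)%N -> 0 < alpha t <= 1) ->
  (forall t, (1 <= t)%N -> 0 < beta t <= 1) ->
  (* MSGDA iterations *)
  v 1%N = gsy (xi 1%N) (x 1%N) (y 1%N) ->
  w 1%N = gsx (xi 1%N) (x 1%N) (y 1%N) ->
  (forall t, (1 <= t)%N -> yt t.+1 = y t + lambda *: v t) ->
  (forall t, (1 <= t)%N -> xt t.+1 = x t - gamma *: w t) ->
  (forall t, (1 <= t)%N -> y t.+1 = y t + eta t *: (yt t.+1 - y t)) ->
  (forall t, (1 <= t)%N -> x t.+1 = x t + eta t *: (xt t.+1 - x t)) ->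
  (forall t, (1 <= t)%N -> v t.+1 = gsy (xi t.+1) (x t.+1) (y t.+1)
      + (1 - alpha t.+1) *: (v t - gsy (xi t.+1) (x t) (y t))) ->
  (forall t, (1 <= t)%N -> w t.+1 = gsx (xi t.+1) (x t.+1) (y t.+1)
      + (1 - beta t.+1) *: (w t - gsx (xi t.+1) (x t) (y t))) ->
  (* step-size conditions, with kappa = Lf/mu and L = Lf (1 + kappa/2) *)
  0 < gamma ->
  gamma <= lambda * mu / (16 * (Lf * (1 + (Lf / mu) / 2))) ->
  0 < lambda ->
  (forall t, (1 <= t)%N -> lambda <= 1 / (2 * Lf * eta t)) ->
  forall t, (1 <= t)%N ->
    Fmax f (x t.+1) - f (x t.+1) (y t.+1)
    <= (1 - eta t * lambda * mu / 2) * (Fmax f (x t) - f (x t) (y t))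
       + eta t / (8 * gamma) * sqnorm (xt t.+1 - x t)
       - eta t / (4 * lambda) * sqnorm (yt t.+1 - y t)
       + eta t * lambda * sqnorm (gy (x t) (y t) - v t).
Proof.
move=> Hint Hf Hgsx Hgsy Hgx Hgy mu0 Hmax HPL Lf0 Lxx Lxy Lyx Lyy eta0 alpha0 beta0 v1 w1
  Hyt Hxt Hy Hx Hv Hw g0 hg l0 hl t t1.
have desc : forall a b ww, f a b + dotv (gy a b) ww - Lf / 2 * sqnorm ww <= f a (b + ww).
  by move=> a b ww; apply: (@f_descent R d p dm Xi P fs gsy f gy Lf).
have glip : forall x0 x1 b, enorm (gy x1 b - gy x0 b) <= Lf * enorm (x1 - x0).
  by move=> *; apply: (@gy_lip R d p dm Xi P fs gsy f gy Lf).
have mixed : forall x0 x1 b ww, f x1 (b + ww) - f x0 (b + ww) - f x1 b + f x0 b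
    <= Lf * enorm (x1 - x0) * enorm ww.
  by move=> *; apply: (@f_mixed R d p dm Xi P fs gsy f Lf).
have ub : forall a b, f a b <= Fmax f a by move=> *; apply: Fmax_ub.
have gb : forall a b, sqnorm (gy a b) <= 2 * Lf * (Fmax f a - f a b).
  by move=> a b; apply: (@grad_bound R d p f gy Lf)...
have qg : forall a b0 eps, 0 < eps -> exists b, Fmax f a - f a b <= eps /\
    enorm (b - b0) <= Num.sqrt (2 * (Fmax f a - f a b0) / mu) + eps.
  by move=> a b0 eps e0; apply: (@QG R d p f gy Lf mu).
set et := eta t.
have et0 : 0 < et := eta0 t t1.
have hlt := hl t t1.
rewrite -/et in hlt.
have hx1 : x t.+1 = x t + et *: (xt t.+1 - x t) by rewrite Hx.
have hyt : yt t.+1 - y t = lambda *: v t by rewrite Hyt // addrAC subrr add0r.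
have hy1 : y t.+1 = y t + et *: (lambda *: v t) by rewrite Hy // hyt.
have hdx : x t.+1 - x t = et *: (xt t.+1 - x t) by rewrite hx1 addrAC subrr add0r.
set Dl := xt t.+1 - x t.
set V := v t.
set nd := enorm Dl.
have nd0 : 0 <= nd := enorm_ge0 _.
set M := Lf * et * nd.
have M0 : 0 <= M by rewrite !mulr_ge0 // ltW.
have exn : enorm (x t.+1 - x t) = et * nd by rewrite hdx enormZ ger0_norm // ltW.
set G := Fmax f (x t) - f (x t) (y t).
set G' := Fmax f (x t.+1) - f (x t.+1) (y t).
have G0 : 0 <= G by rewrite subr_ge0.
have G'0 : 0 <= G' by rewrite subr_ge0.
set rho := Num.sqrt (2 * G' / mu).
have rho0 : 0 <= rho := sqrtr_ge0 _.
have hG : G' <= G + Lf * et * nd * rho.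
  apply/ler_addgt0Pr => e e0.
  have M1 : 0 < 1 + M by lra.
  have [bs [hb1 hb2]] := qg (x t.+1) (y t) (e / (1 + M)) (divr_gt0 e0 M1).
  have hm := mixed (x t) (x t.+1) (y t) (bs - y t).
  rewrite subrKC exn mulrA -/M in hm.
  rewrite -/G' -/rho in hb2.
  have hu := ub (x t) bs.
  have k : M * enorm (bs - y t) <= M * (rho + e / (1 + M)) by apply: ler_wpM2l.
  have E : e / (1 + M) + M * (e / (1 + M)) = e by field; rewrite gt_eqF.
  rewrite /G /G' -/M; lra.
set g := gy (x t) (y t).
set g' := gy (x t.+1) (y t).
have hF : Fmax f (x t.+1) - f (x t.+1) (y t.+1)
   <= G' - et * (lambda * dotv g' V) + Lf / 2 * (et ^+ 2 * (lambda ^+ 2 * sqnorm V)).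
  have := desc (x t.+1) (y t) (et *: (lambda *: V)).
  rewrite -hy1 !dotvZr !sqnormZ -/g'.
  rewrite /G'; lra.
have hA : et * lambda * (2 * Lf) <= 1.
  by move: hlt; rewrite ler_pdivlMr ?mulr_gt0 // => h; nra.
rewrite -(enorm_sq Dl) -/nd hyt sqnormZ.
have [mL|Lm] := leP mu Lf.
  have hgg : sqnorm (g' - g) <= (Lf * et * nd) ^+ 2.
    have := glip (x t) (x t.+1) (y t); rewrite exn -/g -/g' => h.
    have := enorm_ge0 (g' - g); rewrite -enorm_sq; nra.
  have hgvp : sqnorm (g' - V) <= 2 * sqnorm (g - V) + 2 * sqnorm (g' - g).
    have E : (g - V) + (g' - g) = g' - V by rewrite addrC addrA subrK.
    rewrite -E sqnormD.
    have := sqnorm_ge0 ((g - V) - (g' - g)); rewrite sqnormB; lra.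
  have hdv : 2 * dotv g' V = sqnorm g' + sqnorm V - sqnorm (g' - V).
    by rewrite sqnormB; ring.
  have hgp : 2 * mu * G' <= sqnorm g' := HPL _ _.
  have hr : rho ^+ 2 * mu = 2 * G'.
    rewrite /rho sqr_sqrtr; first by field; rewrite gt_eqF.
    by apply: divr_ge0; [apply: mulr_ge0 | apply: ltW].
  exact: (@final_alg R _ _ _ _ _ _ _ _ _ _ _ _ _ _ _ _ et0 l0 mu0 Lf0 g0 mL hg hlt nd0
     (sqnorm_ge0 V) G'0 rho0 hr hG hdv hgvp hgg hgp hF).
have zero : forall a b, Fmax f a - f a b = 0 /\ gy a b = 0.
  move=> a b; have h1 := HPL a b; have h2 := gb a b.
  have h3 : 0 <= Fmax f a - f a b by rewrite subr_ge0.
  have E0 : Fmax f a - f a b = 0.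
    apply/eqP; rewrite eq_le h3 andbT; nra.
  split => //; apply: sqnorm_eq0; have := sqnorm_ge0 (gy a b); rewrite E0 in h2; lra.
have [EG' zg'] := zero (x t.+1) (y t).
have [EG zg] := zero (x t) (y t).
rewrite -/G' in EG'; rewrite -/G in EG.
rewrite -/g in zg; rewrite -/g' in zg'.
rewrite zg' /dotv big1 in hF; last by move=> i _; rewrite mxE mul0r.
rewrite EG zg sub0r sqnormN.
have V0 := sqnorm_ge0 V.
have k1 : 0 <= et / (8 * gamma) * nd ^+ 2 by rewrite mulr_ge0 ?sqr_ge0 // divr_ge0 // ?mulr_ge0 // ltW.
have k2 : et / (4 * lambda) * (lambda ^+ 2 * sqnorm V) = et * lambda / 4 * sqnorm V.
  by field; rewrite gt_eqF.
have k3 : Lf / 2 * (et ^+ 2 * (lambda ^+ 2 * sqnorm V)) <= et * lambda / 4 * sqnorm V.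
  have : 0 <= et * lambda * sqnorm V / 4 by rewrite divr_ge0 // mulr_ge0 // mulr_ge0 // ltW.
  move=> h; have := ler_wpM2r h hA.
  have -> : Lf / 2 * (et ^+ 2 * (lambda ^+ 2 * sqnorm V)) = et * lambda * (2 * Lf) * (et * lambda * sqnorm V / 4) by field.
  by rewrite mul1r; have -> : et * lambda / 4 * sqnorm V = et * lambda * sqnorm V / 4 by field.
have k4 : 0 <= et * lambda * sqnorm V by rewrite mulr_ge0 // mulr_ge0 // ltW.
rewrite k2; rewrite EG' in hF; lra.
Qed.
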